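(* Let $f$, $X_n$, $Y_m$ be as in the context. If $n\geq 2$ and $m<n$, then every map $VX_n\to VY_m$ has some fibre containing at least $f(n)$ vertices; in particular there is no coarse $(f(n)-1)$-wiring of $X_n$ into $Y_m$.
   Context: Fix a function $f:\mathbb{N}\to\mathbb{N}$ (with $\mathbb{N}=\{1,2,\dots\}$) that is surjective, satisfies $f(1)=1$, $2\leq f(n)\leq n$ for all $n\geq 2$, and $|f^{-1}(k)|=\infty$ for every $k\geq 2$. For $n\in\mathbb{N}$ let $X_n$ be the graph with vertex set $\{0,1,\dots,f(n)-1\}\times\{0,1,\dots,2^{2^{2n}}f(n)\}$, with edges $(i,j)(i,j+1)$ for all $0\leq i\leq f(n)-1$, $0\leq j\leq 2^{2^{2n}}f(n)-1$, and $(i,j)(i+1,j)$ for all $0\leq i\leq f(n)-2$ and all $j$ that are multiples of $2^{2^{2n}}$. Let $Y_n$ be defined in the same way with $2^{2^{2n}}$ replaced everywhere by $2^{2^{2n+1}}$. A coarse $k$-wiring of a finite graph $\Gamma$ into a graph $Y$ is a continuous map sending vertices to vertices and edges onto unions of edges, such that each vertex of $Y$ has at most $k$ preimage vertices and each edge of $Y$ lies in the images of at most $k$ edges of $\Gamma$. *)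

(* Defs.v *)
From mathcomp Require Import all_boot.
Set Implicit Arguments. Unset Strict Implicit. Unset Printing Implicit Defensive.

Definition gridV (a L : nat) (v : nat * nat) : bool :=
  (v.1 < a) && (v.2 <= L * a).

(* gridE a L u v : u -> v is one of the listed edges, each undirected edge
   listed exactly once:  (i,j)(i,j+1)  for all i, j <= L*a - 1,
                         (i,j)(i+1,j)  for i <= a-2 and L %| j. *)
Definition gridE (a L : nat) (u v : nat * nat) : bool :=
  [&& gridV a L u, gridV a L v &
     ((u.1 == v.1) && (v.2 == u.2.+1))
     || [&& v.1 == u.1.+1, u.2 == v.2 & L %| u.2]].

Definition gridAdj (a L : nat) (u v : nat * nat) : bool :=
  gridE a L u v || gridE a L v u.

Definition XV (f : nat -> nat) (n : nat) := gridV (f n) (2 ^ (2 ^ (2 * n))).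
Definition XE (f : nat -> nat) (n : nat) := gridE (f n) (2 ^ (2 ^ (2 * n))).
Definition YV (f : nat -> nat) (n : nat) := gridV (f n) (2 ^ (2 ^ (2 * n).+1)).
Definition YAdj (f : nat -> nat) (n : nat) := gridAdj (f n) (2 ^ (2 ^ (2 * n).+1)).

(* A walk in Y is given by its start a and the list p of subsequent vertices. *)
Definition is_walk {T : eqType} (VY : pred T) (EY : rel T) (a b : T) (p : seq T) : bool :=
  [&& all VY (a :: p), path EY a p & last a p == b].

Definition walk_uses {T : eqType} (a : T) (p : seq T) (y z : T) : bool :=
  has (fun e => (e == (y, z)) || (e == (z, y))) (zip (a :: p) p).

(* EG lists each undirected edge of G once (as an ordered pair), EY is the
   symmetric adjacency of Y.  Combinatorially, a continuous map sending
   vertices to vertices and edges onto unions of edges is a vertex map phi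
   together with, for each edge uv of G, a walk of positive length in Y from
   phi u to phi v (the image of the edge). *)
Definition coarse_wiring {T T' : eqType} (k : nat)
  (VG : pred T) (EG : rel T) (VY : pred T') (EY : rel T') : Prop :=
  exists (phi : T -> T') (P : T -> T -> seq T'),
    [/\ (forall v, VG v -> VY (phi v)),
        (forall u v, VG u -> VG v -> EG u v ->
           is_walk VY EY (phi u) (phi v) (P u v) /\ 0 < size (P u v)),
        (forall y, VY y -> forall s : seq T,
           uniq s -> all VG s -> all (fun x => phi x == y) s -> size s <= k)
      & (* each edge of Y lies in the images of at most k edges of G *)
        (forall y z, VY y -> VY z -> EY y z -> forall s : seq (T * T),
           uniq s ->
           (forall e, e \in s -> [&& VG e.1, VG e.2, EG e.1 e.2 &
                                    walk_uses (phi e.1) (P e.1 e.2) y z]) ->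
           size s <= k)].

(* Main.v *)
Require Import Defs.
From mathcomp Require Import all_boot zify.

Definition SX (a L : nat) : seq (nat * nat) :=
  [seq (i, j) | i <- iota 0 a, j <- iota 0 (L * a + 1)].

Lemma SX_mem a L x : (x \in SX a L) = gridV a L x.
Proof.
case: x => x1 x2; rewrite /gridV /=.
apply/allpairsP/andP => [[[i j] /= [Hi Hj [-> ->]]]|[H1 H2]].
  by move: Hi Hj; rewrite !mem_iota; lia.
exists (x1, x2); split=> //; rewrite mem_iota /=; lia.
Qed.

Lemma SX_uniq a L : uniq (SX a L).
Proof.
apply: allpairs_uniq; rewrite ?iota_uniq //.
by move=> [? ?] [? ?] _ _ /= [-> ->].
Qed.

Lemma SX_size a L : size (SX a L) = a * (L * a + 1).
Proof. by rewrite size_allpairs !size_iota. Qed.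

Lemma sumn_add (T' : Type) (g h : T' -> nat) (sy : seq T') :
  sumn [seq g y + h y | y <- sy] = sumn [seq g y | y <- sy] + sumn [seq h y | y <- sy].
Proof. by elim: sy => //= y sy ->; rewrite addnACA. Qed.

Lemma sumn_eq1 (T' : eqType) (sy : seq T') (z : T') :
  sumn [seq (z == y) : nat | y <- sy] = count_mem z sy.
Proof. by elim: sy => //= y sy ->; rewrite eq_sym. Qed.

Lemma count_sum (T T' : eqType) (phi : T -> T') (sx : seq T) (sy : seq T') :
  uniq sy -> all (fun x => phi x \in sy) sx ->
  size sx = sumn [seq count (fun x => phi x == y) sx | y <- sy].
Proof.
move=> Uy; elim: sx => [|x sx IH] /=.
  by elim: sy {Uy} => //= ? ? <-.
case/andP=> Hx /IH ->.
rewrite sumn_add sumn_eq1 count_uniq_mem // Hx //.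
Qed.

Lemma sumn_le (T' : eqType) (g : T' -> nat) (sy : seq T') k :
  (forall y, y \in sy -> g y <= k) -> sumn [seq g y | y <- sy] <= size sy * k.
Proof.
elim: sy => //= y sy IH H; rewrite mulSn leq_add ?H ?mem_head //.
by apply: IH => z hz; apply: H; rewrite inE hz orbT.
Qed.

Lemma pigeon a L b L' (phi : nat * nat -> nat * nat) :
  (forall v, gridV a L v -> gridV b L' (phi v)) ->
  (b * (L' * b + 1)) * (a - 1) < a * (L * a + 1) ->
  exists y, gridV b L' y /\ exists s : seq (nat * nat),
    [/\ uniq s, all (gridV a L) s, all (fun x => phi x == y) s & a <= size s].
Proof.
move=> Hphi Hlt.
case H: (has (fun y => a <= count (fun x => phi x == y) (SX a L)) (SX b L')).
  case/hasP: H => y; rewrite SX_mem => Hy Hc.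
  exists y; split=> //; exists [seq x <- SX a L | phi x == y]; split.
  - by rewrite filter_uniq // SX_uniq.
  - by apply/allP => x; rewrite mem_filter SX_mem => /andP[].
  - by apply/allP => x; rewrite mem_filter => /andP[].
  - by rewrite size_filter.
exfalso; move/hasPn: H => H.
have E := @count_sum _ _ phi (SX a L) (SX b L') (SX_uniq b L').
have : size (SX a L) <= size (SX b L') * (a - 1).
  rewrite E; last by apply/allP => x; rewrite !SX_mem; exact: Hphi.
  apply: sumn_le => y /H; rewrite -ltnNge => h; rewrite -ltnS; apply: leq_trans h _; lia.
rewrite !SX_size; lia.
Qed.

Lemma arith n m a b : 2 <= n -> 0 < m -> m < n -> 2 <= a <= n -> 1 <= b <= n ->
  (b * (2 ^ (2 ^ (2 * m).+1) * b + 1)) * (a - 1) < a * (2 ^ (2 ^ (2 * n)) * a + 1).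
Proof.
move=> hn hm hmn ha hb.
set K := 2 ^ (2 ^ (2 * n - 1)).
have hL : 2 ^ (2 ^ (2 * n)) = K * K.
  rewrite /K -expnD; congr (2 ^ _).
  by rewrite addnn -mul2n -expnS; congr (2 ^ _); lia.
have hL' : 2 ^ (2 ^ (2 * m).+1) <= K.
  by rewrite /K leq_exp2l // leq_exp2l //; lia.
have hK : n * n <= K.
  have h1 : n < 2 ^ n := ltn_expl n (isT : 1 < 2).
  have h2 : 2 * n <= 2 ^ (2 * n - 1).
    have := ltn_expl (2 * n - 1) (isT : 1 < 2); move: (2 ^ (2 * n - 1)) => X; lia.
  apply: (@leq_trans (2 ^ (2 * n))).
    by rewrite mul2n -addnn expnD; apply: leq_mul; apply: ltnW.
  by rewrite /K leq_exp2l.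
rewrite hL.
set L' := 2 ^ (2 ^ (2 * m).+1) in hL' *.
clear hL; move: L' hL' hK; rewrite -/K; move: K => K L' hL' hK.
have s1 : b * (L' * b + 1) <= n * (K * n + 1).
  apply: leq_mul; first lia.
  by rewrite leq_add2r; apply: leq_mul; lia.
have hnn : n <= n * n by rewrite leq_pmull //; lia.
have hK1 : 1 <= K by lia.
have hKn : n <= K * (n * n) by apply: (leq_trans hnn); rewrite leq_pmull.
have s2 : n * (K * n + 1) <= 2 * K * (n * n).
  lia.
have s3 : 2 * K * (n * n) * (a - 1) < a * (K * K * a).
  have t1 : K * (n * n) <= K * K by rewrite leq_mul2l hK orbT.
  have t2 : 2 * (a - 1) < a * a by nia.
  have t3 : 1 <= K * K by rewrite muln_gt0 hK1.
  have -> : 2 * K * (n * n) * (a - 1) = (K * (n * n)) * (2 * (a - 1)) by lia.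
  have -> : a * (K * K * a) = (K * K) * (a * a) by lia.
  apply: (leq_ltn_trans (leq_mul t1 (leqnn _))).
  by rewrite ltn_mul2l t2 andbT.
apply: (leq_ltn_trans (leq_mul s1 (leqnn (a - 1)))).
apply: (leq_ltn_trans (leq_mul s2 (leqnn (a - 1)))).
apply: (leq_trans s3); nia.
Qed.

Theorem mainTheorem3 (f : nat -> nat)
  (f_surj : forall k, 0 < k -> exists n, 0 < n /\ f n = k)
  (f_1 : f 1 = 1)
  (f_bnd : forall n, 2 <= n -> 2 <= f n <= n)
  (f_inf : forall k, 2 <= k -> forall N, exists n, N < n /\ f n = k)
  (n m : nat) (hn : 2 <= n) (hm : 0 < m) (hmn : m < n) :
  (forall phi : nat * nat -> nat * nat,
     (forall v, XV f n v -> YV f m (phi v)) ->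
     exists y, YV f m y /\
       exists s : seq (nat * nat),
         [/\ uniq s, all (XV f n) s, all (fun x => phi x == y) s & f n <= size s])
  /\ ~ coarse_wiring (f n - 1) (XV f n) (XE f n) (YV f m) (YAdj f m).
Proof.
have ha := f_bnd n hn.
have hb : 1 <= f m <= n.
  case: (ltnP m 2) => hm2.
    have -> : m = 1 by lia.
    rewrite f_1; lia.
  by have := f_bnd m hm2; lia.
have Hp : forall phi : nat * nat -> nat * nat,
     (forall v, XV f n v -> YV f m (phi v)) ->
     exists y, YV f m y /\
       exists s : seq (nat * nat),
         [/\ uniq s, all (XV f n) s, all (fun x => phi x == y) s & f n <= size s].
  move=> phi Hphi; apply: pigeon => //.
  exact: arith.
split => //.
case=> phi [P [HV _ Hk _]].
have [y [Hy [s [Us As Ps Ss]]]] := Hp phi HV.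
move: (leq_trans Ss (Hk y Hy s Us As Ps)); lia.
Qed.
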